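(* Every multiset $A$ of $n$ real numbers with at least two distinct elements contains, as a submultiset, $m$ copies of a set of size $r$ for some positive integers $m,r$ with $r\ge2$ and $mr^3\ge M(A)/\log n$.
   Context: For a multiset $A$ of $n$ reals, its multiplicity profile $\mu(A)=(\mu_1,\ldots,\mu_\ell)$ is the partition of $n$ such that the $\ell$ distinct elements of $A$ occur with multiplicities $\mu_1\ge\cdots\ge\mu_\ell$, and $M(A)=\sum_{i=1}^{\ell}(i-1)^2\mu_i$. Here $\log$ is the natural logarithm. *)

(* Defs.v *)
From HB Require Import structures.
From mathcomp Require Import all_boot all_order all_algebra.
From mathcomp Require Import reals exp.
Set Implicit Arguments. Unset Strict Implicit. Unset Printing Implicit Defensive.
Import Order.TTheory GRing.Theory Num.Theory.

(* A multiset of elements of T is represented by a finite sequence;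
   its elements with multiplicity are the entries of the sequence. *)

Definition mult_profile (T : eqType) (A : seq T) : seq nat :=
  sort geq [seq count_mem x A | x <- undup A].

(* M(A) = sum_{i=1}^{l} (i-1)^2 mu_i ; with 0-based index i this is i^2 mu_(i). *)
Definition M (T : eqType) (A : seq T) : nat :=
  let mu := mult_profile A in
  \sum_(i < size mu) i ^ 2 * nth 0 mu i.

(* Main.v *)
Require Import Defs.
From HB Require Import structures.
From mathcomp Require Import all_boot all_order all_algebra.
From mathcomp Require Import reals exp.
From mathcomp Require Import lra.
Import Order.TTheory GRing.Theory Num.Theory.
Local Open Scope ring_scope.

Definition hh (R : realType) (i : nat) : R := if i == 0%N then 0 else (i.+1%:R)^-1.

Lemma harm (R : realType) (l : nat) : (0 < l)%N ->
  \sum_(i < l) hh R i <= ln (l%:R : R).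
Proof.
elim: l => // l IH _.
case: l IH => [|l] IH.
  by rewrite big_ord1 /hh /= ln1.
rewrite big_ord_recr /=.
have := IH isT => {}IH.
have step : hh R l.+1 <= ln (l.+2%:R : R) - ln (l.+1%:R).
  rewrite /hh /=.
  have h1 : (l.+1%:R : R) = l.+2%:R * (1 + - (l.+2%:R)^-1).
    rewrite mulrDr mulr1 mulrN divff ?pnatr_eq0 // -(natr1 l.+1) addrK //.
  rewrite {1}h1 lnM ?posrE //; last first.
    rewrite subr_gt0 invf_lt1 ?ltr1n //.
  have := @le_ln1Dx R (- (l.+2%:R)^-1).
  have : (l.+2%:R : R)^-1 < 1 by rewrite invf_lt1 ?ltr1n.
  move=> H1 H2; have := H2 ltac:(rewrite ltrN2; exact H1). by rewrite opprD addrA subrr add0r lerNr.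
lra.
Qed.

Lemma key (R : realType) (mu : seq nat) : (1 < size mu)%N ->
  exists k, [/\ (1 <= k)%N, (k < size mu)%N &
    ((\sum_(i < size mu) i ^ 2 * nth 0 mu i)%N%:R : R)
      <= ((nth 0 mu k * k.+1 ^ 3)%N)%:R * ln ((size mu)%:R : R)].
Proof.
move=> hl.
set l := size mu in hl *.
pose i0 : 'I_l := Ordinal hl.
pose F (i : 'I_l) := (nth 0 mu i * i.+1 ^ 3)%N.
have P0 : (fun i : 'I_l => (1 <= i)%N) i0 by [].
pose P := (fun i : 'I_l => (1 <= i)%N).
case: (@arg_maxnP _ i0 P F P0) => k k1 kmax.
exists k; split => //.
set B := F k.
rewrite natr_sum.
apply: (@le_trans _ _ (\sum_(i < l) B%:R * hh R i)).
  apply: ler_sum => i _.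
  rewrite /hh; case: eqP => [->|/eqP i0'].
    by rewrite mulr0 exp0n // mul0n.
  have hi : (1 <= i)%N by rewrite lt0n.
  have := kmax i hi; rewrite -/B /F => hB.
  rewrite ler_pdivlMr ?ltr0n // -natrM ler_nat.
  apply: leq_trans hB.
  rewrite mulnAC [X in (_ <= X)%N]mulnC leq_mul2r; apply/orP; right.
  rewrite expnS mulnC leq_mul2l; apply/orP; right.
  by rewrite expn1 leq_mul // leqnSn.
rewrite -mulr_sumr ler_wpM2l ?ler0n //.
by apply: harm; apply: (ltn_trans _ hl).
Qed.

Theorem proposition2p9 (R : realType) (A : seq R) :
  (1 < size (undup A))%N ->
  exists (S : seq R) (m : nat),
    [/\ uniq S, (2 <= size S)%N, (0 < m)%N,
        all (fun x => (m <= count_mem x A)%N) S &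
        (M A)%:R / ln ((size A)%:R : R) <= ((m * size S ^ 3)%N)%:R].
Proof.
move=> hl.
pose cnt x := count_mem x A.
pose U := sort (relpre cnt geq) (undup A).
have permU : perm_eq U (undup A) by rewrite perm_sort.
have muE : mult_profile A = map cnt U by rewrite /mult_profile sort_map.
have sizeU : size U = size (undup A) by rewrite (perm_size permU).
have hl' : (1 < size (mult_profile A))%N by rewrite muE size_map sizeU.
have [k [k1 kl hk]] := @key R _ hl'.
have sortmu : sorted geq (mult_profile A).
  by apply: sort_sorted => a b; apply: leq_total.
have kU : (k < size U)%N by rewrite -(size_map cnt) -muE.
exists (take k.+1 U), (nth 0 (mult_profile A) k); split.
- by rewrite take_uniq // (perm_uniq permU) undup_uniq.
- by rewrite size_takel.
- rewrite muE (nth_map 0) //.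
  have : nth 0 U k \in A by rewrite -mem_undup -(perm_mem permU) mem_nth.
  by rewrite -has_pred1 has_count.
- apply/allP => x /(nthP 0) [j]; rewrite size_takel // => jk <-.
  rewrite nth_take // -/(cnt _) -(nth_map 0 0 cnt) ?(leq_trans jk) // -muE.
  apply: (sorted_leq_nth (leT := geq)) => //.
  + by move=> a b c /= h1 h2; apply: leq_trans h2 h1.
  + by move=> a; exact: leqnn.
  + by rewrite inE /= muE size_map (leq_trans jk).
  all: try by rewrite inE /= muE size_map.
  all: try by rewrite -ltnS.
- have hn : (2 <= size A)%N by apply: leq_trans hl (size_undup A).
  have lnpos : 0 < ln ((size A)%:R : R) by apply: ln_gt0; rewrite ltr1n.
  rewrite ler_pdivrMr // size_takel //.
  apply: (le_trans hk); rewrite ler_wpM2l ?ler0n //.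
  rewrite ler_ln ?posrE ?ltr0n ?ler_nat.
  + by rewrite /mult_profile size_sort size_map size_undup.
  + by apply: ltn_trans hl'.
  + by apply: leq_trans hn.
Qed.
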